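(* For every $x\in\mathrm{mon}(\mathcal{B})$, \[ \sup_{N\in\mathbb{N}}\frac1{\sqrt N}\sum_{n=1}^N|x_n|<\infty; \] in particular $\mathrm{mon}(\mathcal{B})\subset\ell_{2,\infty}$.
   Context: For $N\in\mathbb{N}$, $\mathcal{B}_N$ is the space of functions $f\colon\{-1,1\}^N\to\mathbb{R}$ with sup norm and Fourier–Walsh coefficients $\widehat f(S)=2^{-N}\sum_xf(x)x^S$, $x^S=\prod_{n\in S}x_n$; $\mathcal{B}=\bigcup_N\mathcal{B}_N$. $\mathrm{mon}(\mathcal{B})$ is the set of $x\in\mathbb{R}^{\mathbb{N}}$ for which there is $C>0$ such that $\sum_{S\subset\{1,\dots,N\}}|\widehat f(S)x^S|\le C\|f\|_\infty$ for all $N$ and all $f\in\mathcal{B}_N$. $\ell_{2,\infty}$ is the space of real sequences $x$ with $\sup_n\sqrt n\,x^*_n<\infty$, $x^*$ the decreasing rearrangement of $(|x_n|)$. *)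

(* Defs.v *)
From HB Require Import structures.
From mathcomp Require Import all_boot all_order all_algebra.
From mathcomp Require Import all_classical all_reals ereal.
Set Implicit Arguments. Unset Strict Implicit. Unset Printing Implicit Defensive.
Import Order.TTheory GRing.Theory Num.Theory.
Local Open Scope ring_scope.

(* The Boolean cube {-1,1}^N: a point is a finite function 'I_N -> bool,
   coordinate i being +1 if true and -1 if false. *)
Definition cube (N : nat) := {ffun 'I_N -> bool}.

Definition sgnb (R : ringType) (b : bool) : R := if b then 1 else -1.

Definition walsh (R : ringType) (N : nat) (S : {set 'I_N}) (x : cube N) : R :=
  \prod_(i in S) sgnb R (x i).

Definition fourier (R : realFieldType) (N : nat) (f : cube N -> R)
  (S : {set 'I_N}) : R :=
  (2 ^+ N)^-1 * \sum_(x : cube N) f x * walsh R S x.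

Definition supnorm (R : realFieldType) (N : nat) (f : cube N -> R) : R :=
  \big[Num.max/0]_(x : cube N) `|f x|.

(* Convention: a real sequence (x_1, x_2, ...) is represented by
   x : nat -> R with x k = x_{k+1}.  Coordinate i : 'I_N of the cube
   corresponds to index i+1 in {1,...,N}. *)
Definition monomial (R : realFieldType) (x : nat -> R) (N : nat)
  (S : {set 'I_N}) : R := \prod_(i in S) x (nat_of_ord i).

Definition in_monB (R : realFieldType) (x : nat -> R) : Prop :=
  exists C : R, 0 < C /\
    forall (N : nat) (f : cube N -> R),
      \sum_(S : {set 'I_N}) `|fourier f S * monomial x S| <= C * supnorm f.

(* Decreasing rearrangement x^*_{n+1} (0-indexed: decr x n), defined through the
   distribution function:  x^*_{n+1} = inf { t >= 0 : #{k : |x_k| > t} <= n },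
   as an extended real (+oo if the set is empty, i.e. x unbounded-type case). *)
Definition decr (R : realType) (x : nat -> R) (n : nat) : \bar R :=
  ereal_inf [set (t%:E)%E | t in
    [set t : R | 0 <= t /\ exists s : seq nat,
        (size s <= n)%N /\ forall k, t < `|x k| -> k \in s]].

Definition in_l2inf (R : realType) (x : nat -> R) : Prop :=
  exists M : R, forall n : nat,
    ((Num.sqrt (n.+1%:R : R))%:E * decr x n <= M%:E)%E.

(* Main.v *)
Require Import Defs.
From HB Require Import structures.
From mathcomp Require Import all_boot all_order all_algebra.
From mathcomp Require Import all_classical all_reals ereal.
From mathcomp Require Import ring lra.
Import Order.TTheory GRing.Theory Num.Theory.
Set Implicit Arguments. Unset Strict Implicit.
Local Open Scope ring_scope.
Section Cube.
Variable R : realType.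

Definition ccons N (b : bool) (y : cube N) : cube N.+1 :=
  [ffun i : 'I_N.+1 => if unlift ord0 i is Some j then y j else b].
Definition ctail N (y : cube N.+1) : cube N := [ffun j : 'I_N => y (lift ord0 j)].

Lemma split_cube N (G : cube N.+1 -> R) :
  \sum_(y : cube N.+1) G y = \sum_(b : bool) \sum_(y : cube N) G (ccons b y).
Proof.
rewrite pair_bigA /=.
rewrite (reindex (fun p : bool * cube N => ccons p.1 p.2)) //=.
exists (fun y : cube N.+1 => (y ord0, ctail y)).
  case=> b y _ /=.
  congr pair; first by rewrite ffunE unlift_none.
  by apply/ffunP => j; rewrite !ffunE liftK.
move=> y _ /=.
apply/ffunP => i; rewrite !ffunE; case: unliftP => [j|] ->.
  by rewrite ffunE.
by [].
Qed.

Definition E N (g : cube N -> R) : R := (2 ^+ N)^-1 * \sum_(y : cube N) g y.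

Lemma E_split N (G : cube N.+1 -> R) :
  E G = E (fun y => (G (ccons true y) + G (ccons false y)) / 2).
Proof.
rewrite /E split_cube big_bool /= -big_split /= -mulr_suml exprS.
rewrite invfM; ring.
Qed.

Lemma ED N (f g : cube N -> R) : E (fun y => f y + g y) = E f + E g.
Proof. by rewrite /E big_split mulrDr. Qed.

Lemma EZ N c (f : cube N -> R) : E (fun y => c * f y) = c * E f.
Proof. by rewrite /E -mulr_sumr; ring. Qed.

Lemma EC N c : E (fun _ : cube N => c) = c.
Proof.
rewrite /E sumr_const card_ffun card_ord card_bool.
have -> : c *+ (2 ^ N) = c * 2 ^+ N by rewrite -natrX mulr_natr.
by rewrite mulrC -mulrA mulfV ?mulr1 // expf_neq0 // pnatr_eq0.
Qed.

Lemma E_le N (f g : cube N -> R) : (forall y, f y <= g y) -> E f <= E g.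
Proof.
move=> H; rewrite /E ler_wpM2l ?invr_ge0 ?exprn_ge0 //.
by apply: ler_sum => y _.
Qed.

Definition sT N (a : nat -> R) (y : cube N) : R := \sum_(i < N) a i * sgnb R (y i).

Lemma sT_cons (N : nat) (a : nat -> R) (b : bool) (y : cube N) :
  sT a (ccons b y) = a 0%N * sgnb R b + sT (fun k => a k.+1) y :> R.
Proof.
rewrite /sT big_ord_recl ffunE unlift_none; congr (_ + _).
by apply: eq_bigr => j _; rewrite ffunE liftK.
Qed.

Lemma m2 N a : E (fun y : cube N => sT a y ^+ 2) = \sum_(i < N) a i ^+ 2.
Proof.
elim: N a => [|N IH] a.
  rewrite big_ord0; under eq_fun do rewrite /sT big_ord0 expr0n /=.
  by rewrite EC.
rewrite E_split big_ord_recl.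
under eq_fun do rewrite !sT_cons /=.
have -> : \sum_(i < N) a (lift ord0 i) ^+ 2 = \sum_(i < N) (fun k => a k.+1) i ^+ 2.
  by apply: eq_bigr => i _; rewrite lift0.
have -> : a (@ord0 N) = a 0%N by [].
rewrite -(IH (fun k => a k.+1)) -(EC N (a 0%N ^+ 2)) -ED.
by apply: f_equal; apply: funext => y /=; field.
Qed.

Lemma m4 N a : E (fun y : cube N => sT a y ^+ 4) <= 3 * (\sum_(i < N) a i ^+ 2) ^+ 2.
Proof.
elim: N a => [|N IH] a.
  rewrite big_ord0; under eq_fun do rewrite /sT big_ord0 expr0n /=.
  by rewrite EC expr0n /= mulr0.
rewrite E_split big_ord_recl.
under eq_fun do rewrite !sT_cons /=.
have -> : a (@ord0 N) = a 0%N by [].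
set b := fun k => a k.+1.
set Q := \sum_(i < N) b i ^+ 2.
have -> : E (N:=N) (fun y => ((a 0%N * 1 + sT b y) ^+ 4 +
       (a 0%N * -1 + sT b y) ^+ 4) / 2) =
   E (N:=N) (fun _ => a 0%N ^+ 4) + (6 * a 0%N ^+ 2) * E (N:=N) (fun y => sT b y ^+ 2)
    + E (N:=N) (fun y => sT b y ^+ 4).
  by rewrite -EZ -!ED; apply: f_equal; apply: funext => y /=; field.
rewrite EC m2 -/Q.
have := IH b; rewrite -/Q => h.
have q0 : 0 <= Q by apply: sumr_ge0 => i _; apply: sqr_ge0.
have a0 : 0 <= a 0%N ^+ 2 by apply: sqr_ge0.
have -> : a 0%N ^+ 4 = (a 0%N ^+ 2) ^+ 2 by rewrite -exprM.
set u := a 0%N ^+ 2 in a0 *.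
have : 6 * u * Q + u ^+ 2 <= 3 * (u + Q) ^+ 2 - 3 * Q ^+ 2 by nra.
lra.
Qed.

End Cube.
Section Main.
Variable R : realType.

Lemma ptw (t k : R) : 0 < k -> t ^+ 2 <= k * `|t| + t ^+ 4 / k ^+ 2.
Proof.
move=> k0; have n0 := normr_ge0 t.
have e2 : t ^+ 2 = `|t| ^+ 2 by rewrite real_normK ?num_real.
have e4 : t ^+ 4 = (`|t| ^+ 2) ^+ 2 by rewrite -e2 -exprM.
rewrite e4 e2; set u := `|t| in n0 *.
have kk : 0 < k ^+ 2 by rewrite exprn_gt0.
case: (lerP u k) => h.
  have : 0 <= (u ^+ 2) ^+ 2 / k ^+ 2 by rewrite divr_ge0 ?exprn_ge0 // ltW.
  have : u ^+ 2 <= k * u by rewrite expr2 ler_wpM2r.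
  lra.
have : u ^+ 2 <= (u ^+ 2) ^+ 2 / k ^+ 2.
  rewrite ler_pdivlMr //.
  have : k ^+ 2 <= u ^+ 2 by rewrite lerXn2r // ?nnegrE ltW // (le_lt_trans _ h) // ltW.
  nra.
have : 0 <= k * u by rewrite mulr_ge0 // ltW.
lra.
Qed.

Lemma fourier_sum N (a : nat -> R) :
  \sum_(i < N) fourier (fun y => Num.sg (sT a y)) [set i] * monomial a [set i]
  = E (fun y : cube N => `|sT a y|).
Proof.
rewrite /E /fourier /monomial.
under eq_bigr do rewrite big_set1 /walsh.
under eq_bigr do under eq_bigr do rewrite big_set1.
under eq_bigr do rewrite -mulrA.
rewrite -mulr_sumr; congr (_ * _).
under eq_bigr do rewrite mulr_suml.
rewrite exchange_big /=; apply: eq_bigr => y _.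
rewrite normrEsg /sT mulr_sumr; apply: eq_bigr => i _; ring.
Qed.

Lemma sub_sum N (g : {set 'I_N} -> R) :
  \sum_(i < N) g [set i] <= \sum_(S : {set 'I_N}) `|g S|.
Proof.
apply: (le_trans (y := \sum_(i < N) `|g [set i]|)).
  by apply: ler_sum => i _; apply: ler_norm.
rewrite -(big_imset (fun S => `|g S|) (in2W set1_inj)) /=.
rewrite [X in _ <= X](bigID (fun S => S \in [set [set x] | x : 'I_N])) /=.
rewrite lerDl; apply: sumr_ge0 => S _; apply: normr_ge0.
Qed.

Lemma key (x : nat -> R) (C : R) : 0 < C ->
  (forall (N : nat) (f : cube N -> R),
      \sum_(S : {set 'I_N}) `|fourier f S * monomial x S| <= C * supnorm f) ->
  forall N, \sum_(i < N) x i ^+ 2 <= 64 * C ^+ 2.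
Proof.
move=> C0 H N.
set f := fun y : cube N => Num.sg (sT x y).
have sf : supnorm f <= 1.
  rewrite /supnorm; apply: bigmax_le => // y _.
  by rewrite normr_sg; case: (_ != 0).
have EA : E (fun y : cube N => `|sT x y|) <= C.
  rewrite -(fourier_sum N x); apply: le_trans (sub_sum (fun S => fourier f S * monomial x S)) _.
  apply: le_trans (H N f) _; rewrite -[leRHS]mulr1 ler_wpM2l // ltW //.
set Q := \sum_(i < N) x i ^+ 2.
have q0 : 0 <= Q by apply: sumr_ge0 => i _; apply: sqr_ge0.
have [->|qp] := eqVneq Q 0; first by rewrite mulr_ge0 // sqr_ge0.
have qp' : 0 < Q by rewrite lt0r qp.
set s := Num.sqrt Q.
have sp : 0 < s by rewrite sqrtr_gt0.
have ss : s ^+ 2 = Q by rewrite sqr_sqrtr.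
have k0 : 0 < 2 * s by rewrite mulr_gt0.
have h1 : Q <= 2 * s * E (fun y : cube N => `|sT x y|) + 3 * Q ^+ 2 / (2 * s) ^+ 2.
  rewrite {1}/Q -(m2 N x).
  apply: le_trans (E_le (g := fun y => 2 * s * `|sT x y| + sT x y ^+ 4 / (2 * s) ^+ 2) _) _.
    by move=> y; apply: ptw.
  rewrite ED EZ.
  have -> : (fun y : cube N => sT x y ^+ 4 / (2 * s) ^+ 2) =
            (fun y => ((2 * s) ^+ 2)^-1 * sT x y ^+ 4).
    by apply: funext => y; rewrite mulrC.
  rewrite EZ lerD2l mulrC ler_wpM2r ?invr_ge0 ?exprn_ge0 ?(ltW k0) //.
  exact: m4.
have e3 : 3 * Q ^+ 2 / (2 * s) ^+ 2 = 3 / 4 * Q.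
  rewrite -ss; field; by rewrite gt_eqF.
rewrite e3 in h1.
set e := E _ in EA h1.
have : s <= 8 * e.
  rewrite -ss in h1; nra.
rewrite -ss => h2.
have : s <= 8 * C by lra.
move=> h3; have : s ^+ 2 <= (8 * C) ^+ 2 by rewrite lerXn2r // ?nnegrE ltW // ?mulr_gt0.
lra.
Qed.

End Main.
Section Final.
Variable R : realType.

Lemma cnt (x : nat -> R) (t : R) (s : seq nat) : 0 <= t ->
  (count (fun k => t < `|x k|) s)%:R * t ^+ 2 <= \sum_(k <- s) x k ^+ 2.
Proof.
move=> t0; elim: s => [|k s IH]; first by rewrite big_nil mul0r.
rewrite big_cons /= natrD mulrDl; apply: lerD => //.
have [h|h] := boolP (t < `|x k|); rewrite ?(negbTE h) /=; last by rewrite mul0r sqr_ge0.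
rewrite mul1r -[x k ^+ 2]real_normK ?num_real // lerXn2r // ?nnegrE // ltW //.
Qed.

Lemma count_bound (x : nat -> R) (K : R) (n : nat) :
  0 < K -> (forall N, \sum_(i < N) x i ^+ 2 < K ^+ 2) ->
  forall M, (count (fun k => (K / Num.sqrt (n.+1%:R : R) < `|x k|)%R) (iota 0 M) <= n)%N.
Proof.
move=> K0 hQ M.
set s := Num.sqrt (n.+1%:R : R).
have sp : 0 < s by rewrite sqrtr_gt0 ltr0Sn.
have ss : s ^+ 2 = n.+1%:R by rewrite sqr_sqrtr // ler0n.
set t := K / s.
have t0 : 0 <= t by rewrite divr_ge0 // ltW.
have h := cnt x (iota 0 M) t0.
have := hQ M; rewrite -(big_mkord xpredT (fun i => x i ^+ 2)) /index_iota subn0 => h2.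
have e : K ^+ 2 = n.+1%:R * t ^+ 2.
  rewrite /t -ss; field; by rewrite gt_eqF.
rewrite e in h2.
have : (count (fun k => t < `|x k|) (iota 0 M))%:R < n.+1%:R :> R.
  have tp : 0 < t ^+ 2 by rewrite exprn_gt0 // divr_gt0.
  rewrite -(ltr_pM2r tp); exact: le_lt_trans h h2.
by rewrite ltr_nat ltnS.
Qed.

Lemma max_exists (c : nat -> nat) (n : nat) : (forall M, (c M <= n)%N) ->
  exists M0, forall M, (c M <= c M0)%N.
Proof.
move=> hb.
have [//|nM] := pselect (exists M0, forall M, (c M <= c M0)%N).
have step : forall M0, exists M, (c M0 < c M)%N.
  move=> M0; apply: contrapT => h; apply: nM; exists M0 => M.
  rewrite leqNgt; apply/negP => hh; apply: h; by exists M.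
have : forall j, exists M, (j <= c M)%N.
  elim=> [|j [M hM]]; first by exists 0%N.
  have [M' hM'] := step M; exists M'; exact: leq_ltn_trans hM hM'.
move=> /(_ n.+1) [M hM]; have := hb M; rewrite leqNgt => /negP; by [].
Qed.

Lemma finite_cover (P : pred nat) (n : nat) :
  (forall M, (count P (iota 0 M) <= n)%N) ->
  exists s : seq nat, (size s <= n)%N /\ forall k, P k -> k \in s.
Proof.
move=> hb; have [M0 hM0] := max_exists hb.
exists (seq.filter P (iota 0 M0)); split; first by rewrite size_filter.
move=> k Pk; rewrite mem_filter Pk /= mem_iota /=.
rewrite ltnNge; apply/negP => kM.
have := hM0 k.+1.
have le : (M0 <= k.+1)%N by apply: leqW.
rewrite -(subnKC le) iotaD count_cat add0n -[X in (_ <= X)%N]addn0 leq_add2l leqn0.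
move/eqP => c0.
have : has P (iota M0 (k.+1 - M0)).
  apply/hasP; exists k => //.
  rewrite mem_iota subnKC //; rewrite add0n in kM; by rewrite kM ltnS leqnn.
by rewrite has_count c0.
Qed.

End Final.

Theorem proposition6p12 (R : realType) (x : nat -> R) :
  in_monB x ->
  (exists M : R, forall N : nat,
      (Num.sqrt (N.+1%:R : R))^-1 * \sum_(n < N.+1) `|x n| <= M)
  /\ in_l2inf x.
Proof.
move=> [C [C0 H]].
set K := 8 * C + 1.
have K0 : 0 < K by rewrite /K; lra.
have hQ : forall N, \sum_(i < N) x i ^+ 2 < K ^+ 2.
  move=> N; have := key C0 H N; rewrite /K; nra.
split.
  exists K => N.
  set s := Num.sqrt (N.+1%:R : R).
  have sp : 0 < s by rewrite sqrtr_gt0 ltr0Sn.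
  have ss : s ^+ 2 = N.+1%:R by rewrite sqr_sqrtr // ler0n.
  rewrite mulrC ler_pdivrMr //.
  set S1 := \sum_(n < N.+1) `|x n|.
  have h : \sum_(n < N.+1) (2 * s * K * `|x n|) <=
            \sum_(n < N.+1) (s ^+ 2 * x n ^+ 2 + K ^+ 2).
    apply: ler_sum => i _.
    rewrite -[x i ^+ 2]real_normK ?num_real //.
    have := sqr_ge0 (s * `|x i| - K); nra.
  rewrite -mulr_sumr big_split /= -mulr_sumr sumr_const card_ord -/S1 in h.
  have e : K ^+ 2 *+ N.+1 = s ^+ 2 * K ^+ 2 by rewrite ss mulr_natl.
  rewrite e in h.
  have q := hQ N.+1.
  have s2 : 0 < s ^+ 2 by rewrite exprn_gt0.
  have : 2 * s * K * S1 <= 2 * s * K * (s * K) by nra.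
  rewrite ler_pM2l //; first by rewrite mulrC.
  by rewrite !mulr_gt0.
exists K => n.
set s := Num.sqrt (n.+1%:R : R).
have sp : 0 < s by rewrite sqrtr_gt0 ltr0Sn.
set t := K / s.
have t0 : 0 <= t by rewrite divr_ge0 // ltW.
have hd : (decr x n <= t%:E)%E.
  apply: ge_ereal_inf; exists (t%:E) => //; exists t => //.
  split => //; apply: finite_cover; exact: count_bound.
apply: le_trans (lee_wpmul2l _ hd) _; first by rewrite lee_fin ltW.
by rewrite -EFinM /t mulrC divfK // gt_eqF.
Qed.
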